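(* Let $P$ be an $n \times n$ partial Latin square with $r$ completely filled columns, one further column in which exactly $s$ cells are filled, and all other columns empty. If $n \geq 2r+s$, then $P$ is completable.
   Context: A partial Latin square of order $n$ is an $n\times n$ array in which each cell is empty or contains one symbol from $\{1,\dots,n\}$, with no symbol occurring twice in a row or column. $P$ is completable if there is an $n\times n$ Latin square (no empty cells) agreeing with $P$ on every nonempty cell of $P$. *)

(* Defs.v *)
From mathcomp Require Import all_boot.
Set Implicit Arguments. Unset Strict Implicit. Unset Printing Implicit Defensive.

(* A partial array of order n: cell (i,j) (row i, column j) is empty (None)
   or holds a symbol (Some k), symbols are 'I_n (standing for 1..n). *)
Definition parray (n : nat) := {ffun 'I_n * 'I_n -> option 'I_n}.

Definition is_PLS n (P : parray n) : Prop :=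
  (forall i j j' k, P (i, j) = Some k -> P (i, j') = Some k -> j = j') /\
  (forall i i' j k, P (i, j) = Some k -> P (i', j) = Some k -> i = i').

Definition is_LS n (L : parray n) : Prop :=
  (forall c, L c != None) /\ is_PLS L.

Definition completable n (P : parray n) : Prop :=
  exists L : parray n, is_LS L /\ forall c k, P c = Some k -> L c = Some k.

Definition col_filled n (P : parray n) (j : 'I_n) : nat :=
  #|[set i : 'I_n | P (i, j) != None]|.

(* Main.v *)
Require Import Defs.
From mathcomp Require Import all_boot zify.
Set Implicit Arguments. Unset Strict Implicit. Unset Printing Implicit Defensive.

Section HallS.
Variables (TA TB : finType) (adj : TA -> TB -> bool) (b0 : TB).
Definition nbr (B : {set TB}) (X : {set TA}) := [set b in B | [exists a in X, adj a b]].

Lemma nbrU_sub B X Y : nbr B (Y :|: X) \subset nbr B Y :|: nbr B X.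
Proof.
apply/subsetP=> b; rewrite !inE => /andP[bB /existsP[a /andP[]]].
by rewrite !inE => /orP[] aY ab; rewrite bB /=; apply/orP; [left|right];
  apply/existsP; exists a; rewrite aY ab.
Qed.

Lemma nbrD B X Y : nbr (B :\: nbr B X) Y = nbr B Y :\: nbr B X.
Proof. by apply/setP=> b; rewrite !inE andbA. Qed.

Lemma nbrD1 B b Y : nbr (B :\ b) Y = nbr B Y :\ b.
Proof. by apply/setP=> c; rewrite !inE andbA. Qed.

Lemma hall : forall (A : {set TA}) (B : {set TB}),
  (forall X : {set TA}, X \subset A -> #|X| <= #|nbr B X|) ->
  exists f : TA -> TB, {in A &, injective f} /\
    (forall a, a \in A -> (f a \in B) && adj a (f a)).
Proof.
move=> A; move: {2}#|A| (leqnn #|A|) => m; elim: m A => [|m IH] A hA B hall.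
  exists (fun _ => b0); split=> [x y xA|x xA].
    by move: hA; rewrite leqn0 cards_eq0 => /eqP Ae; move: xA; rewrite Ae inE.
  by move: hA; rewrite leqn0 cards_eq0 => /eqP Ae; move: xA; rewrite Ae inE.
case: (ltnP #|A| m.+1) => [hlt|hge]; first by apply: IH.
have Am : #|A| = m.+1 by lia.
case: (boolP [exists X : {set TA}, [&& X \subset A, X != set0, X != A & #|nbr B X| <= #|X|]]).
  case/existsP=> X /and4P[XA Xn0 XnA cX].
  have XltA : #|X| < #|A| by apply: proper_card; rewrite properEneq XnA.
  have [f1 [inj1 h1]] : exists f : TA -> TB, {in X &, injective f} /\
    (forall a, a \in X -> (f a \in B) && adj a (f a)).
    apply: IH; first by lia.
    by move=> Y YX; apply: hall; apply: subset_trans YX XA.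
  have cX0 : 0 < #|X| by rewrite card_gt0.
  have cAX : #|A :\: X| = #|A| - #|X| by rewrite cardsD (setIidPr XA).
  have [f2 [inj2 h2]] : exists f : TA -> TB, {in A :\: X &, injective f} /\
    (forall a, a \in A :\: X -> (f a \in B :\: nbr B X) && adj a (f a)).
    apply: IH; first by lia.
    move=> Y YAX; rewrite nbrD.
    have hYX := hall (Y :|: X) ltac:(by rewrite subUset XA (subset_trans YAX) ?subsetDl).
    have dj : Y :&: X = set0.
      apply/setP=> x; rewrite !inE; case: (boolP (x \in Y)) => //= /(subsetP YAX).
      by rewrite inE => /andP[/negbTE ->].
    have := subset_leq_card (nbrU_sub B X Y).
    move: hYX; rewrite !cardsU cardsD dj cards0.
    have := subset_leq_card (subsetIl (nbr B Y) (nbr B X)).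
    have hX : #|nbr B X| = #|X|.
      by apply/eqP; rewrite eqn_leq cX hall.
    lia.
  exists (fun a => if a \in X then f1 a else f2 a); split.
    move=> x y xA yA /=.
    case: (boolP (x \in X)) => xX; case: (boolP (y \in X)) => yX.
    - exact: inj1.
    - move=> e; have := h2 y; rewrite inE yX yA => /(_ isT).
      case/andP; rewrite inE -e => /andP[/negP nX _] _; exfalso; apply: nX.
      have /andP[xB axb] := h1 x xX.
      by rewrite inE xB; apply/existsP; exists x; rewrite xX.
    - move=> e; have := h2 x; rewrite inE xX xA => /(_ isT).
      case/andP; rewrite inE e => /andP[/negP nX _] _; exfalso; apply: nX.
      have /andP[yB ayb] := h1 y yX.
      by rewrite inE yB; apply/existsP; exists y; rewrite yX.
    - by apply: inj2; rewrite inE ?xX ?yX.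
  move=> a aA; case: (boolP (a \in X)) => aX; first exact: h1.
  have := h2 a; rewrite inE aX aA => /(_ isT); rewrite inE.
  by case/andP=> /andP[_ ->] ->.
move/existsPn=> noX.
have : A != set0 by rewrite -card_gt0 Am.
case/set0Pn=> a aA.
have := hall [set a]; rewrite sub1set aA cards1 => /(_ isT) /card_gt0P[b].
rewrite inE => /andP[bB /existsP[a' /andP[]]]; rewrite inE => /eqP -> ab.
have [f2 [inj2 h2]] : exists f : TA -> TB, {in A :\ a &, injective f} /\
    (forall x, x \in A :\ a -> (f x \in B :\ b) && adj x (f x)).
  apply: IH; first by move: Am; rewrite (cardsD1 a A) aA; lia.
  move=> Y YA; rewrite nbrD1.
  case: (boolP (Y == set0)) => [/eqP->|Yn0]; first by rewrite cards0.
  have YA' : Y \subset A by apply: subset_trans YA (subsetDl _ _).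
  have YnA : Y != A.
    apply/eqP=> e; move: YA; rewrite e => /subsetP /(_ a aA); by rewrite !inE eqxx.
  have := noX Y; rewrite YA' Yn0 YnA /= -ltnNge => hY.
  have := cardsD1 b (nbr B Y); case: (b \in nbr B Y) => /=; lia.
exists (fun x => if x == a then b else f2 x); split.
  move=> x y xA yA /=.
  case: (boolP (x == a)) => xa; case: (boolP (y == a)) => ya.
  - by rewrite (eqP xa) (eqP ya).
  - move=> e; have := h2 y; rewrite !inE ya yA => /(_ isT).
    by rewrite -e eqxx.
  - move=> e; have := h2 x; rewrite !inE xa xA => /(_ isT).
    by rewrite e eqxx.
  - by apply: inj2; rewrite !inE ?xa ?ya.
move=> x xA; case: (boolP (x == a)) => [/eqP->|xa]; first by rewrite bB ab.
have := h2 x; rewrite !inE xa xA => /(_ isT).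
by case/andP=> /andP[_ ->] ->.
Qed.
End HallS.
From mathcomp Require Import all_boot zify.
Set Implicit Arguments. Unset Strict Implicit. Unset Printing Implicit Defensive.

Definition fillcol n (Q : parray n) (j : 'I_n) (f : 'I_n -> 'I_n) : parray n :=
  [ffun c => if c.2 == j then (if Q c is Some k then Some k else Some (f c.1)) else Q c].

Lemma fill_PLS n (Q : parray n) j f : is_PLS Q ->
  (forall i, Q (i,j) = None -> forall j', Q (i,j') != Some (f i)) ->
  (forall i, Q (i,j) = None -> forall i', Q (i',j) != Some (f i)) ->
  (forall i1 i2, Q (i1,j) = None -> Q (i2,j) = None -> f i1 = f i2 -> i1 = i2) ->
  is_PLS (fillcol Q j f).
Proof.
move=> [hr hc] ha hb hi; split.
  move=> i j1 j2 k; rewrite !ffunE /=.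
  case: (eqVneq j1 j) => [->|n1]; case: (eqVneq j2 j) => [->|n2] //.
  - case E: (Q (i,j)) => [k'|] [<-] h2; first exact: hr E h2.
    by move: (ha i E j2); rewrite h2 eqxx.
  - case E: (Q (i,j)) => [k'|] h1 [e]; rewrite -e in h1.
      by apply: hr h1 E.
    by move: (ha i E j1); rewrite h1 eqxx.
  - exact: hr.
move=> i1 i2 j1 k; rewrite !ffunE /=; case: (eqVneq j1 j) => [->|n1]; last exact: hc.
case E1: (Q (i1,j)) => [k1|]; case E2: (Q (i2,j)) => [k2|] [e1] [e2].
- by rewrite e1 in E1; rewrite e2 in E2; apply: hc E1 E2.
- by move: (hb i2 E2 i1); rewrite E1 e1 e2 eqxx.
- by move: (hb i1 E1 i2); rewrite E2 e1 e2 eqxx.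
- by apply: hi; rewrite // e1 e2.
Qed.

Lemma fill_ext n (Q : parray n) j f c k : Q c = Some k -> fillcol Q j f c = Some k.
Proof. by move=> h; rewrite ffunE h; case: ifP. Qed.

Lemma fill_full n (Q : parray n) j f i : fillcol Q j f (i,j) != None.
Proof. by rewrite ffunE /= eqxx; case: (Q (i,j)). Qed.

Lemma fill_other n (Q : parray n) j f i j' : j' != j -> fillcol Q j f (i,j') = Q (i,j').
Proof. by move=> h; rewrite ffunE /= (negbTE h). Qed.

Lemma completable_ext n (Q Q' : parray n) :
  (forall c k, Q c = Some k -> Q' c = Some k) -> completable Q' -> completable Q.
Proof. by move=> h [L [hL hL']]; exists L; split=> // c k /h /hL'. Qed.

Section Rect.
Variable n : nat.

Definition radj (Q : parray n) := fun (i k : 'I_n) => [forall j', Q (i,j') != Some k].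

Definition dich (Q : parray n) :=
  forall j, (forall i, Q (i,j) != None) \/ (forall i, Q (i,j) = None).

Lemma rect_hall (Q : parray n) (j : 'I_n) : is_PLS Q -> dich Q ->
  (forall i, Q (i,j) = None) ->
  forall X : {set 'I_n}, #|X| <= #|nbr (radj Q) setT X|.
Proof.
move=> [hr hc] hd hj X.
pose F := [set j' | [forall i, Q (i,j') != None]].
pose c := #|F|.
pose d := n - c.
have Fj : F \subset [set~ j].
  apply/subsetP=> j'; rewrite !inE => /forallP h; apply/eqP=> e.
  by move: (h j); rewrite e hj.
have cn : c < n.
  have := subset_leq_card Fj; rewrite cardsC1 card_ord /c.
  have := ltn_ord j; lia.
have hR : forall i, d <= #|[set k | radj Q i k]|.
  move=> i.
  have sub : ~: [set k | radj Q i k] \subset [set odflt j (Q (i,j')) | j' in F].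
    apply/subsetP=> k; rewrite !inE => /forallPn [j' /negPn /eqP e].
    apply/imsetP; exists j'; last by rewrite e.
    rewrite inE; apply/forallP=> i'.
    case: (hd j') => h; first exact: h.
    by rewrite h in e.
  have := subset_leq_card sub; have := leq_imset_card (fun j' => odflt j (Q (i,j'))) F.
  have := cardsC [set k | radj Q i k]; rewrite card_ord /d /c; lia.
have hK : forall k, #|[set i | radj Q i k]| <= d.
  move=> k.
  pose g j' := odflt j [pick i | Q (i,j') == Some k].
  have gP : forall j', j' \in F -> Q (g j', j') = Some k.
    move=> j'; rewrite inE => /forallP hf.
    have hinj : injective (fun i => odflt j (Q (i,j'))).
      move=> i1 i2 /=; move: (hf i1) (hf i2).
      case E1: (Q (i1,j')) => [k1|] // _; case E2: (Q (i2,j')) => [k2|] // _ /= e.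
      by rewrite e in E1; apply: hc E1 E2.
    case: (injF_bij hinj) => h' _ c2.
    rewrite /g; case: pickP => [i /eqP //|none].
    move: (none (h' k)) (c2 k) (hf (h' k)) => /=.
    by case: (Q (h' k, j')) => [y|] //= ny yk; rewrite yk eqxx in ny.
  have sub : [set g j' | j' in F] \subset ~: [set i | radj Q i k].
    apply/subsetP=> i /imsetP [j' jF ->]; rewrite !inE /radj.
    by apply/forallPn; exists j'; rewrite negbK gP.
  have ginj : {in F &, injective g}.
    by move=> j1 j2 h1 h2 e; apply: (hr (g j1) j1 j2 k); rewrite ?gP // e gP.
  have := subset_leq_card sub; rewrite card_in_imset //.
  have := cardsC [set i | radj Q i k]; rewrite card_ord /d /c; lia.
have e1 : forall i, #|[set k | radj Q i k]| = \sum_k (radj Q i k : nat).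
  by move=> i; rewrite -sum1_card big_mkcond /=; apply: eq_bigr => k _; rewrite inE; case: radj.
have : #|X| * d <= #|nbr (radj Q) setT X| * d.
  rewrite -!sum_nat_const.
  apply: (@leq_trans (\sum_(i in X) \sum_k (radj Q i k : nat))).
    by apply: leq_sum => i _; rewrite -e1.
  rewrite exchange_big /= [X in _ <= X]big_mkcond /=.
  apply: leq_sum => k _.
  case: (boolP (k \in nbr (radj Q) setT X)) => kN.
    apply: leq_trans (hK k).
    rewrite -sum1_card big_mkcond [X in _ <= X]big_mkcond /=.
    apply: leq_sum => i _; rewrite inE; case: (i \in X); case: radj => //.
  rewrite leqn0 sum_nat_eq0; apply/forallP => i; apply/implyP => iX.
  apply/eqP; case: (boolP (radj Q i k)) => // a; move: kN.
  by rewrite !inE => /existsPn /(_ i); rewrite iX a.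
by rewrite leq_pmul2r // /d subn_gt0.
Qed.
End Rect.

Definition ecols n (Q : parray n) := [set j | [exists i, Q (i,j) == None]].

Lemma rect_complete n : forall m (Q : parray n), #|ecols Q| <= m ->
  is_PLS Q -> dich Q -> completable Q.
Proof.
elim=> [|m IH] Q hE hP hD.
  exists Q; split=> //; split=> // [[i j]].
  move: hE; rewrite leqn0 cards_eq0 => /eqP /setP /(_ j); rewrite !inE.
  by move/negbT/existsPn/(_ i).
case: (eqVneq (ecols Q) set0) => [E0|/set0Pn [j]].
  exists Q; split=> //; split=> // [[i j]].
  by move: E0 => /setP /(_ j); rewrite !inE; move/negbT/existsPn/(_ i).
rewrite inE => /existsP [i0 /eqP hi0].
have hj : forall i, Q (i,j) = None.
  by case: (hD j) => // h; move: (h i0); rewrite hi0.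
have [f [finj fP]] := @hall _ _ (radj Q) j setT setT (fun X _ => rect_hall hP hD hj X).
have hP' : is_PLS (fillcol Q j f).
  apply: fill_PLS => //.
  - by move=> i _; apply/forallP; have := fP i (in_setT i); case/andP.
  - by move=> i _ i'; rewrite hj.
  - by move=> i1 i2 _ _; apply: finj; rewrite in_setT.
have hD' : dich (fillcol Q j f).
  move=> j'; case: (eqVneq j' j) => [->|nj]; first by left=> i; apply: fill_full.
  by case: (hD j') => h; [left|right] => i; rewrite fill_other.
apply: (completable_ext (Q' := fillcol Q j f)); first by move=> c k; apply: fill_ext.
apply: IH hP' hD'.
have sub : ecols (fillcol Q j f) \subset ecols Q :\ j.
  apply/subsetP=> j'; rewrite !inE => /existsP [i /eqP hi].
  case: (eqVneq j' j) => [e|nj]; first by rewrite e in hi; move: (@fill_full _ Q j f i); rewrite hi.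
  by apply/existsP; exists i; rewrite -(@fill_other _ Q j f i j' nj) hi.
have := subset_leq_card sub; have := cardsD1 j (ecols Q).
have jE : j \in ecols Q by rewrite inE; apply/existsP; exists i0; rewrite hi0.
rewrite jE; lia.
Qed.

Theorem lemma2 (n r s : nat) (P : parray n) (C : {set 'I_n}) (j0 : 'I_n) :
  is_PLS P ->
  #|C| = r ->
  (forall j, j \in C -> forall i, P (i, j) != None) ->
  j0 \notin C ->
  col_filled P j0 = s ->
  (forall j, j \notin C -> j != j0 -> forall i, P (i, j) = None) ->
  2 * r + s <= n ->
  completable P.
Proof.
move=> hP hC hfull j0C hs hemp hn.
have [hr hc] := hP.
pose A := [set i | P (i,j0) == None].
pose S := [set k | [exists i, P (i,j0) == Some k]].
pose B := ~: S.
have cA : #|A| = n - s.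
  have e : [set i | P (i,j0) != None] = ~: A by apply/setP=> i; rewrite !inE.
  have hs' : #|[set i | P (i,j0) != None]| = s by rewrite -hs.
  have := cardsC A; rewrite -e card_ord; lia.
have cB : #|B| = n - s.
  have e : S = [set odflt j0 (P (i,j0)) | i in [set i | P (i,j0) != None]].
    apply/setP=> k; rewrite inE; apply/existsP/imsetP.
      by case=> i /eqP hi; exists i; rewrite ?inE hi.
    case=> i; rewrite inE; case E: (P (i,j0)) => [y|] // _ /= ->.
    by exists i; rewrite E.
  have : #|S| = s.
    rewrite e card_in_imset // => i1 i2; rewrite !inE.
    case E1: (P (i1,j0)) => [k1|] // _; case E2: (P (i2,j0)) => [k2|] // _ /= e12.
    by rewrite e12 in E1; apply: hc E1 E2.
  have := cardsC S; rewrite card_ord /B; lia.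
have rowb : forall a, a \in A -> #|[set k | ~~ radj P a k]| <= r.
  move=> a; rewrite inE => /eqP ha.
  rewrite -hC; apply: leq_trans (leq_imset_card (fun j' => odflt j0 (P (a,j'))) C).
  apply: subset_leq_card; apply/subsetP=> k; rewrite inE => /forallPn [j' /negPn /eqP e].
  apply/imsetP; exists j'; last by rewrite e.
  case: (boolP (j' \in C)) => // nC; case: (eqVneq j' j0) => [ej|nj].
    by rewrite ej ha in e.
  by rewrite hemp in e.
have symb : forall k, k \in B -> #|[set i | ~~ radj P i k]| <= r.
  move=> k; rewrite !inE => /existsPn kB.
  pose g j' := odflt j0 [pick i | P (i,j') == Some k].
  rewrite -hC; apply: leq_trans (leq_imset_card g C).
  apply: subset_leq_card; apply/subsetP=> i; rewrite inE => /forallPn [j' /negPn /eqP e].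
  have jC : j' \in C.
    case: (boolP (j' \in C)) => // nC; case: (eqVneq j' j0) => [ej|nj].
      by move: (kB i); rewrite -ej e eqxx.
    by rewrite hemp in e.
  apply/imsetP; exists j' => //; rewrite /g.
  case: pickP => [i' /eqP hi'|none]; last by move: (none i); rewrite e eqxx.
  by rewrite /=; apply: hc e hi'.
have [f [finj fP]] : exists f : 'I_n -> 'I_n, {in A &, injective f} /\
    (forall a, a \in A -> (f a \in B) && radj P a (f a)).
  apply: (@hall _ _ (radj P) j0 A B) => X XA.
  case: (eqVneq X set0) => [->|/set0Pn [a aX]]; first by rewrite cards0.
  have aA : a \in A by apply: (subsetP XA).
  case: (leqP #|X| (n - s - r)) => hX.
    apply: leq_trans hX _.
    have sub : B :\: [set k | ~~ radj P a k] \subset nbr (radj P) B X.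
      apply/subsetP=> k; rewrite !inE negbK => /andP [ak ->] /=.
      by apply/existsP; exists a; rewrite aX.
    apply: leq_trans (subset_leq_card sub); rewrite cardsD.
    have := subset_leq_card (subsetIr B [set k | ~~ radj P a k]).
    have := rowb a aA; lia.
  have sub : B \subset nbr (radj P) B X.
    apply/subsetP=> k kB; rewrite inE kB /=.
    have : ~~ (X \subset [set i | ~~ radj P i k]).
      apply/negP => /subset_leq_card; have := symb k kB; lia.
    case/subsetPn => i iX; rewrite inE negbK => aik.
    by apply/existsP; exists i; rewrite iX.
  apply: leq_trans (subset_leq_card sub); rewrite cB -cA.
  exact: subset_leq_card.
have hP' : is_PLS (fillcol P j0 f).
  apply: fill_PLS => //.
  - move=> i hi; apply/forallP.
    by have := fP i; rewrite inE hi eqxx => /(_ isT) /andP [].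
  - move=> i hi i'; have := fP i; rewrite inE hi eqxx => /(_ isT) /andP [].
    rewrite !inE => /existsPn /(_ i') h _; exact: h.
  - by move=> i1 i2 h1 h2; apply: finj; rewrite inE ?h1 ?h2.
have hD' : dich (fillcol P j0 f).
  move=> j'; case: (eqVneq j' j0) => [->|nj]; first by left=> i; apply: fill_full.
  case: (boolP (j' \in C)) => jC.
    by left=> i; rewrite fill_other //; apply: hfull.
  by right=> i; rewrite fill_other //; apply: hemp.
apply: (completable_ext (Q' := fillcol P j0 f)); first by move=> c k; apply: fill_ext.
exact: (rect_complete (leqnn _) hP' hD').
Qed.
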